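(* Let $K$ be a nonempty finite set and $X=\Delta(K)$ with the norm $\|\cdot\|_1$. Then $D_0\subset D_1$, and the closure of $D_0$ in $\mathcal C(X)$ (uniform norm) equals $D_1$.
   Context: $X=\Delta(K)=\{p\in\mathbb R_+^K:\sum_k p^k=1\}$, viewed as a subset of $\mathbb R^K$ with $\|p\|_1=\sum_k|p^k|$. $D_1=\{f\in\mathcal C(X):\ \forall x,y\in X,\ \forall a,b\ge0,\ af(x)-bf(y)\le\|ax-by\|_1\}$. $D_0$ is the set of functions $f:X\to\mathbb R$ of the following form. There exist: - nonempty finite sets $I,J$, and - matrices $(G^k)_{k\in K}$ in $[-1,1]^{I\times J}$, such that for all $p\in X$, $f(p)=\mathrm{Val}\big(\sum_kp^kG^k\big)$, where $\mathrm{Val}$ denotes the value of a zero-sum matrix game. *)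

(* Defs.v *)
From Stdlib Require Import Reals.
Open Scope R_scope.

Fixpoint rsum (f : nat -> R) (m : nat) : R :=
  match m with
  | O => 0
  | S m' => rsum f m' + f m'
  end.

Definition simplex (m : nat) (p : nat -> R) : Prop :=
  (forall k, (k < m)%nat -> 0 <= p k) /\ rsum p m = 1.

Definition norm1 (n : nat) (x : nat -> R) : R := rsum (fun k => Rabs (x k)) n.

Definition is_value (m l : nat) (A : nat -> nat -> R) (v : R) : Prop :=
  (exists x, simplex m x /\
     forall j, (j < l)%nat -> v <= rsum (fun i => x i * A i j) m) /\
  (exists y, simplex l y /\
     forall i, (i < m)%nat -> rsum (fun j => A i j * y j) l <= v).

(* Functions X -> R are represented by f : (nat -> R) -> R, of which only
   the restriction to X = simplex n matters. *)
Definition contX (n : nat) (f : (nat -> R) -> R) : Prop :=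
  forall x, simplex n x -> forall eps, 0 < eps ->
    exists delta, 0 < delta /\
      forall y, simplex n y -> norm1 n (fun k => x k - y k) < delta ->
        Rabs (f x - f y) < eps.

Definition D1 (n : nat) (f : (nat -> R) -> R) : Prop :=
  contX n f /\
  forall x y, simplex n x -> simplex n y -> forall a b, 0 <= a -> 0 <= b ->
    a * f x - b * f y <= norm1 n (fun k => a * x k - b * y k).

(* G k i j : the (i,j) entry of the matrix G^k *)
Definition D0 (n : nat) (f : (nat -> R) -> R) : Prop :=
  exists (m l : nat) (G : nat -> nat -> nat -> R),
    (1 <= m)%nat /\ (1 <= l)%nat /\
    (forall k i j, (k < n)%nat -> (i < m)%nat -> (j < l)%nat ->
       -1 <= G k i j <= 1) /\
    forall p, simplex n p ->
      is_value m l (fun i j => rsum (fun k => p k * G k i j) n) (f p).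

Definition closure_D0 (n : nat) (f : (nat -> R) -> R) : Prop :=
  contX n f /\
  forall eps, 0 < eps -> exists g, D0 n g /\
    forall p, simplex n p -> Rabs (f p - g p) <= eps.

(* Main.v *)
Require Import Defs.
From Stdlib Require Import Reals Lra Lia ZArith IndefiniteDescription.
Open Scope R_scope.

Lemma rsum_ext f g m : (forall k, (k < m)%nat -> f k = g k) -> rsum f m = rsum g m.
Proof. induction m; simpl; intros H; auto. rewrite IHm by (intros; apply H; lia). rewrite H by lia. auto. Qed.

Lemma rsum_le f g m : (forall k, (k < m)%nat -> f k <= g k) -> rsum f m <= rsum g m.
Proof. induction m; simpl; intros H; [lra|]. assert (H1:= H m ltac:(lia)). assert (rsum f m <= rsum g m) by (apply IHm; intros; apply H; lia). lra. Qed.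

Lemma rsum_plus f g m : rsum (fun k => f k + g k) m = rsum f m + rsum g m.
Proof. induction m; simpl; lra. Qed.

Lemma rsum_minus f g m : rsum (fun k => f k - g k) m = rsum f m - rsum g m.
Proof. induction m; simpl; lra. Qed.

Lemma rsum_scal c f m : rsum (fun k => c * f k) m = c * rsum f m.
Proof. induction m; simpl; [ring|]. rewrite IHm. ring. Qed.

Lemma rsum_scalr c f m : rsum (fun k => f k * c) m = rsum f m * c.
Proof. induction m; simpl; [ring|]. rewrite IHm. ring. Qed.

Lemma rsum_const c m : rsum (fun _ => c) m = INR m * c.
Proof. induction m; simpl rsum; [simpl; ring|]. rewrite IHm, S_INR. ring. Qed.

Lemma rsum_nonneg f m : (forall k, (k < m)%nat -> 0 <= f k) -> 0 <= rsum f m.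
Proof. intros H. replace 0 with (rsum (fun _ => 0) m). apply rsum_le; auto.
rewrite rsum_const; ring. Qed.

Lemma rsum_abs f m : Rabs (rsum f m) <= rsum (fun k => Rabs (f k)) m.
Proof. induction m; simpl. rewrite Rabs_R0; lra.
eapply Rle_trans. apply Rabs_triang. lra. Qed.

Lemma rsum_swap (F : nat -> nat -> R) a b :
  rsum (fun i => rsum (fun j => F i j) b) a = rsum (fun j => rsum (fun i => F i j) a) b.
Proof. induction a; simpl. induction b; simpl; lra.
rewrite IHa. rewrite <- rsum_plus. auto. Qed.

Definition indv (i0 : nat) (i : nat) : R := if Nat.eq_dec i i0 then 1 else 0.

Lemma rsum_ind i0 a m : (i0 < m)%nat -> rsum (fun i => indv i0 i * a i) m = a i0.
Proof. induction m; intros H; [lia|]. simpl. unfold indv at 2.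
destruct (Nat.eq_dec m i0).
- subst. rewrite (rsum_ext _ (fun _ => 0)). rewrite rsum_const. ring.
  intros k Hk. unfold indv. destruct Nat.eq_dec; [lia|ring].
- rewrite IHm by lia. ring. Qed.

Lemma simplex_ind m i0 : (i0 < m)%nat -> simplex m (indv i0).
Proof. intros H; split. intros; unfold indv; destruct Nat.eq_dec; lra.
rewrite (rsum_ext _ (fun i => indv i0 i * 1)). apply rsum_ind; auto.
intros; ring. Qed.

Lemma simplex_le1 m p k : simplex m p -> (k < m)%nat -> p k <= 1.
Proof. intros [H1 H2] Hk. rewrite <- H2. clear H2.
induction m; [lia|]. simpl. destruct (Nat.eq_dec k m).
- subst. assert (0 <= rsum p m) by (apply rsum_nonneg; intros; apply H1; lia). lra.
- assert (p k <= rsum p m) by (apply IHm; intros; [apply H1; lia| lia]).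
  assert (0 <= p m) by (apply H1; lia). lra. Qed.

Definition lin (n : nat) (c p : nat -> R) : R := rsum (fun k => p k * c k) n.

Lemma lin_diff n c p q : (forall k, (k < n)%nat -> -1 <= c k <= 1) ->
  Rabs (lin n c p - lin n c q) <= norm1 n (fun k => p k - q k).
Proof. intros H. unfold lin, norm1. rewrite <- rsum_minus.
eapply Rle_trans. apply rsum_abs. apply rsum_le. intros k Hk.
replace (p k * c k - q k * c k) with ((p k - q k) * c k) by ring.
rewrite Rabs_mult. specialize (H k Hk).
assert (Rabs (c k) <= 1) by (apply Rabs_le; lra).
assert (0 <= Rabs (p k - q k)) by apply Rabs_pos. nra. Qed.

Lemma norm1_sym n p q : norm1 n (fun k => p k - q k) = norm1 n (fun k => q k - p k).
Proof. unfold norm1. apply rsum_ext. intros. apply Rabs_minus_sym. Qed.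

Lemma Rabs_le_bw x a : Rabs x <= a -> - a <= x <= a.
Proof. unfold Rabs; destruct Rcase_abs; lra. Qed.

Lemma lip_contX n f : (forall x y, simplex n x -> simplex n y ->
   f x - f y <= norm1 n (fun k => x k - y k)) -> contX n f.
Proof. intros H x Hx eps He. exists eps; split; auto. intros y Hy Hn.
apply Rabs_def1.
- specialize (H x y Hx Hy). lra.
- specialize (H y x Hy Hx). rewrite norm1_sym in H. lra. Qed.

Lemma D0_ineq n f : D0 n f -> forall x y, simplex n x -> simplex n y ->
  forall a b, 0 <= a -> 0 <= b ->
    a * f x - b * f y <= norm1 n (fun k => a * x k - b * y k).
Proof.
intros [m [l [G [Hm [Hl [HG Hv]]]]]] x y Hx Hy a b Ha Hb.
destruct (Hv x Hx) as [[s [Hs Hs1]] _].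
destruct (Hv y Hy) as [_ [t [Ht Ht1]]].
cbv beta in Hs1, Ht1.
set (N := norm1 n (fun k => a * x k - b * y k)).
set (Ax := fun i j => rsum (fun k => x k * G k i j) n).
set (Ay := fun i j => rsum (fun k => y k * G k i j) n).
assert (E1 : a * f x <= rsum (fun j => rsum (fun i => s i * t j * (a * Ax i j)) m) l).
{ replace (a * f x) with (rsum (fun j => t j * (a * f x)) l)
    by (rewrite rsum_scalr; destruct Ht as [_ ->]; ring).
  apply rsum_le. intros j Hj.
  rewrite (rsum_ext _ (fun i => (t j * a) * (s i * Ax i j))) by (intros; ring).
  rewrite rsum_scal. destruct Ht as [Ht0 _]. specialize (Ht0 j Hj).
  specialize (Hs1 j Hj). unfold Ax. assert (0 <= t j * a) by nra. nra. }
assert (E2 : rsum (fun i => rsum (fun j => s i * t j * (b * Ay i j)) l) m <= b * f y).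
{ replace (b * f y) with (rsum (fun i => s i * (b * f y)) m)
    by (rewrite rsum_scalr; destruct Hs as [_ ->]; ring).
  apply rsum_le. intros i Hi.
  rewrite (rsum_ext _ (fun j => (s i * b) * (Ay i j * t j))) by (intros; ring).
  rewrite rsum_scal. destruct Hs as [Hs0 _]. specialize (Hs0 i Hi).
  specialize (Ht1 i Hi). unfold Ay. assert (0 <= s i * b) by nra. nra. }
rewrite rsum_swap in E2.
assert (E3 : rsum (fun j => rsum (fun i => s i * t j * (a * Ax i j)) m) l
   - rsum (fun j => rsum (fun i => s i * t j * (b * Ay i j)) m) l <= N).
{ rewrite <- rsum_minus.
  replace N with (rsum (fun j => t j * N) l) by (rewrite rsum_scalr; destruct Ht as [_ ->]; ring).
  apply rsum_le. intros j Hj. rewrite <- rsum_minus.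
  replace (t j * N) with (rsum (fun i => s i * (t j * N)) m) by (rewrite rsum_scalr; destruct Hs as [_ ->]; ring).
  apply rsum_le. intros i Hi.
  assert (a * Ax i j - b * Ay i j <= N).
  { unfold Ax, Ay, N, norm1. rewrite <- !rsum_scal, <- rsum_minus.
    eapply Rle_trans. apply Rle_abs. eapply Rle_trans. apply rsum_abs.
    apply rsum_le. intros k Hk.
    replace (a * (x k * G k i j) - b * (y k * G k i j)) with ((a * x k - b * y k) * G k i j) by ring.
    rewrite Rabs_mult. specialize (HG k i j Hk Hi Hj).
    assert (Rabs (G k i j) <= 1) by (apply Rabs_le; lra).
    assert (0 <= Rabs (a * x k - b * y k)) by apply Rabs_pos. nra. }
  destruct Hs as [Hs0 _]; destruct Ht as [Ht0 _].
  specialize (Hs0 i Hi); specialize (Ht0 j Hj).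
  assert (0 <= s i * t j) by nra. nra. }
lra. Qed.

Lemma D0_D1 n f : D0 n f -> D1 n f.
Proof. intros H. split.
- apply lip_contX. intros x y Hx Hy.
  pose proof (D0_ineq n f H x y Hx Hy 1 1 ltac:(lra) ltac:(lra)).
  unfold norm1 in *. rewrite (rsum_ext _ (fun k => Rabs (1 * x k - 1 * y k))).
  lra. intros; f_equal; ring.
- apply D0_ineq; auto. Qed.

Lemma closure_D1 n f : closure_D0 n f -> D1 n f.
Proof. intros [Hc Ha]. split; auto.
intros x y Hx Hy a b H1 H2.
set (N := norm1 n (fun k => a * x k - b * y k)).
apply Rnot_lt_le. intros Hlt.
set (d := a * f x - b * f y - N).
assert (Hd : 0 < d) by (unfold d; lra).
set (eps := d / (2 * (a + b + 1))).
assert (He : 0 < eps) by (unfold eps; apply Rdiv_lt_0_compat; lra).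
destruct (Ha eps He) as [g [Hg Hfg]].
pose proof (D0_ineq n g Hg x y Hx Hy a b H1 H2) as Hi. fold N in Hi.
pose proof (Hfg x Hx) as E1. pose proof (Hfg y Hy) as E2.
apply Rabs_le_bw in E1. apply Rabs_le_bw in E2.
assert (eps * (2 * (a+b+1)) = d) by (unfold eps; field; lra).
assert (a * f x <= a * g x + a * eps) by nra.
assert (- b * f y <= - b * g y + b * eps) by nra.
assert (a * eps + b * eps < d) by nra. unfold d in *. lra. Qed.

Fixpoint mxr (g : nat -> R) (T : nat) : R :=
  match T with O => g O | S T' => Rmax (mxr g T') (g (S T')) end.
Fixpoint mnr (g : nat -> R) (T : nat) : R :=
  match T with O => g O | S T' => Rmin (mnr g T') (g (S T')) end.
Fixpoint amx (g : nat -> R) (T : nat) : nat :=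
  match T with O => O | S T' => if Rle_dec (g (S T')) (mxr g T') then amx g T' else S T' end.
Fixpoint amn (g : nat -> R) (T : nat) : nat :=
  match T with O => O | S T' => if Rle_dec (mnr g T') (g (S T')) then amn g T' else S T' end.

Lemma mxr_ge g T s : (s <= T)%nat -> g s <= mxr g T.
Proof. induction T as [|T IH]; simpl; intros H. replace s with O by lia; lra.
destruct (Nat.eq_dec s (S T)). subst. apply Rmax_r.
eapply Rle_trans. apply IH; lia. apply Rmax_l. Qed.

Lemma mnr_le g T s : (s <= T)%nat -> mnr g T <= g s.
Proof. induction T as [|T IH]; simpl; intros H. replace s with O by lia; lra.
destruct (Nat.eq_dec s (S T)). subst. apply Rmin_r.
eapply Rle_trans. apply Rmin_l. apply IH; lia. Qed.

Lemma amx_spec g T : (amx g T <= T)%nat /\ g (amx g T) = mxr g T.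
Proof. induction T as [|T IH]; simpl. auto. destruct Rle_dec.
- rewrite Rmax_left by lra. destruct IH; split; auto; lia.
- rewrite Rmax_right by lra. auto. Qed.

Lemma amn_spec g T : (amn g T <= T)%nat /\ g (amn g T) = mnr g T.
Proof. induction T as [|T IH]; simpl. auto. destruct Rle_dec.
- rewrite Rmin_left by lra. destruct IH; split; auto; lia.
- rewrite Rmin_right by lra. auto. Qed.

Lemma mxr_le g T v : (forall s, (s <= T)%nat -> g s <= v) -> mxr g T <= v.
Proof. intros H. destruct (amx_spec g T) as [H1 <-]. auto. Qed.
Lemma mnr_ge g T v : (forall s, (s <= T)%nat -> v <= g s) -> v <= mnr g T.
Proof. intros H. destruct (amn_spec g T) as [H1 <-]. auto. Qed.

Definition digit (b r i : nat) : nat := ((i / b ^ r) mod b)%nat.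

Lemma digit_lt b r i : (1 <= b)%nat -> (digit b r i < b)%nat.
Proof. intros; unfold digit; apply Nat.mod_upper_bound; lia. Qed.

Lemma digits_exist b (Hb : (1 <= b)%nat) Q (s : nat -> nat) :
  (forall r, (r < Q)%nat -> (s r < b)%nat) ->
  exists i, (i < b ^ Q)%nat /\ forall r, (r < Q)%nat -> digit b r i = s r.
Proof.
induction Q as [|Q IHR]; intros Hs.
- exists O; split. simpl; lia. intros; lia.
- destruct IHR as [i [Hi Hd]]. intros; apply Hs; lia.
  exists (i + s Q * b ^ Q)%nat. split.
  + assert (s Q < b)%nat by (apply Hs; lia). rewrite Nat.pow_succ_r'. nia.
  + intros r Hr. unfold digit. assert (Hpos : (b ^ r <> 0)%nat) by (apply Nat.pow_nonzero; lia).
    destruct (Nat.eq_dec r Q).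
    * subst. rewrite Nat.div_add by auto. rewrite Nat.div_small by auto.
      simpl. apply Nat.mod_small. apply Hs; lia.
    * replace (s Q * b ^ Q)%nat with ((s Q * b ^ (Q - r - 1) * b) * b ^ r)%nat.
      2:{ assert (E : (b ^ Q = b ^ (Q - r - 1) * b * b ^ r)%nat).
          { rewrite (Nat.mul_comm (b ^ (Q - r - 1)) b), <- Nat.pow_succ_r', <- Nat.pow_add_r. f_equal. lia. }
          rewrite E. ring. }
      rewrite Nat.div_add by auto. rewrite Nat.Div0.mod_add. apply Hd. lia.
Qed.

Lemma minmax_D0 n Q T (C : nat -> nat -> nat -> R) :
  (forall r s k, (r <= Q)%nat -> (s <= T)%nat -> (k < n)%nat -> -1 <= C r s k <= 1) ->
  D0 n (fun p => mnr (fun r => mxr (fun s => lin n (C r s) p) T) Q).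
Proof.
intros HC. exists ((T+1) ^ (Q+1))%nat, (Q+1)%nat,
  (fun k i j => C j (digit (T+1) j i) k).
split. { assert ((T+1)^(Q+1) <> 0)%nat by (apply Nat.pow_nonzero; lia). lia. }
split. lia.
split. { intros k i j Hk Hi Hj. apply HC; try lia.
  pose proof (digit_lt (T+1) j i ltac:(lia)). lia. }
intros p Hp. cbv beta.
set (h := fun r s => lin n (C r s) p).
set (g := fun r => mxr (h r) T).
change (mnr (fun r => mxr (fun s => lin n (C r s) p) T) Q) with (mnr g Q).
split.
- destruct (digits_exist (T+1) ltac:(lia) (Q+1) (fun r => amx (h r) T)) as [i0 [Hi0 Hd]].
  { intros r _. destruct (amx_spec (h r) T). lia. }
  exists (indv i0). split. apply simplex_ind; auto.
  intros j Hj. rewrite (rsum_ind i0 (fun i => rsum (fun k => p k * C j (digit (T+1) j i) k) n)) by auto.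
  rewrite Hd by auto.
  change (rsum (fun k => p k * C j (amx (h j) T) k) n) with (h j (amx (h j) T)).
  destruct (amx_spec (h j) T) as [_ ->]. apply (mnr_le g Q j). lia.
- set (r0 := amn g Q). destruct (amn_spec g Q) as [Hr0 Hg0]. fold r0 in Hr0, Hg0.
  exists (indv r0). split. apply simplex_ind; lia.
  intros i Hi.
  rewrite (rsum_ext _ (fun j => indv r0 j * rsum (fun k => p k * C j (digit (T+1) j i) k) n))
    by (intros; ring).
  rewrite rsum_ind by lia. rewrite <- Hg0. unfold g.
  apply (mxr_ge (h r0) T). pose proof (digit_lt (T+1) r0 i ltac:(lia)). lia.
Qed.

Definition cl (z : R) : R := / 2 * (Rabs (z + 1) - Rabs (z - 1)).

Lemma cl_bound z : -1 <= cl z <= 1.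
Proof. unfold cl, Rabs; repeat destruct Rcase_abs; lra. Qed.
Lemma cl_one z : 1 <= z -> cl z = 1.
Proof. unfold cl, Rabs; repeat destruct Rcase_abs; lra. Qed.
Lemma cl_mone z : z <= -1 -> cl z = -1.
Proof. unfold cl, Rabs; repeat destruct Rcase_abs; lra. Qed.
Lemma cl_pos z : 0 <= z -> 0 <= cl z.
Proof. unfold cl, Rabs; repeat destruct Rcase_abs; lra. Qed.
Lemma cl_mid z : -1 <= z <= 1 -> cl z = z.
Proof. unfold cl, Rabs; repeat destruct Rcase_abs; lra. Qed.

Lemma cl_prod z h : 0 < h -> Rabs z - h <= z * cl (z / h).
Proof. intros Hh. set (w := z / h). assert (Hz : z = w * h) by (unfold w; field; lra).
rewrite Hz. destruct (Rle_dec 1 w).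
- rewrite cl_one by auto. rewrite Rabs_right by nra. lra.
- destruct (Rle_dec w (-1)).
  + rewrite cl_mone by auto. rewrite Rabs_left by nra. lra.
  + rewrite cl_mid by lra. rewrite Rabs_mult, (Rabs_right h) by lra.
    assert (Rabs w <= 1) by (apply Rabs_le; lra). nra.
Qed.

Lemma rsum_cont (F : nat -> R -> R) m : (forall k, continuity (F k)) ->
  continuity (fun t => rsum (fun k => F k t) m).
Proof. intros H. induction m; simpl.
- apply continuity_const. intros a b; auto.
- apply continuity_plus; auto. Qed.

Lemma cl_cont : continuity cl.
Proof. unfold cl. apply continuity_scal. apply continuity_minus.
- apply (continuity_comp (fun z => z + 1) Rabs). apply continuity_plus.
  apply derivable_continuous, derivable_id. apply continuity_const; intros a b; auto.
  apply Rcontinuity_abs.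
- apply (continuity_comp (fun z => z - 1) Rabs). apply continuity_minus.
  apply derivable_continuous, derivable_id. apply continuity_const; intros a b; auto.
  apply Rcontinuity_abs.
Qed.


Definition D1ineq n (f : (nat -> R) -> R) : Prop :=
  forall x y, simplex n x -> simplex n y -> forall a b, 0 <= a -> 0 <= b ->
    a * f x - b * f y <= norm1 n (fun k => a * x k - b * y k).

Lemma norm1_simplex n x : simplex n x -> norm1 n x = 1.
Proof. intros [H1 H2]. unfold norm1. rewrite <- H2. apply rsum_ext.
intros. apply Rabs_right. apply Rle_ge, H1; auto. Qed.

Lemma f_bound n f x : D1ineq n f -> simplex n x -> -1 <= f x <= 1.
Proof. intros H Hx. pose proof (norm1_simplex n x Hx) as E.
split.
- pose proof (H x x Hx Hx 0 1 ltac:(lra) ltac:(lra)).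
  unfold norm1 in *. rewrite (rsum_ext _ (fun k => Rabs (x k))) in H0. lra.
  intros. rewrite <- Rabs_Ropp. f_equal. ring.
- pose proof (H x x Hx Hx 1 0 ltac:(lra) ltac:(lra)).
  unfold norm1 in *. rewrite (rsum_ext _ (fun k => Rabs (x k))) in H0. lra.
  intros. f_equal. ring. Qed.

Lemma interp1 n (hn : (1 <= n)%nat) f x q eta : D1ineq n f -> simplex n x -> simplex n q ->
  0 < eta -> eta <= 1 ->
  exists c, (forall k, -1 <= c k <= 1) /\ lin n c x <= f x + eta /\ f q - eta <= lin n c q.
Proof.
intros HD Hx Hq He He1.
assert (Hn : 1 <= INR n) by (apply (le_INR 1); auto).
set (h := eta / (2 * INR n)).
assert (Hh : 0 < h) by (unfold h; apply Rdiv_lt_0_compat; lra).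
assert (Hnh : INR n * h = eta / 2) by (unfold h; field; lra).
set (A := 2 * INR n * (1 + h)).
set (T := A / eta + 1).
assert (HA : 0 < A) by (unfold A; nra).
assert (HT1 : 1 <= T) by (unfold T; assert (0 <= A / eta) by (apply Rlt_le, Rdiv_lt_0_compat; lra); lra).
assert (HeT : eta * T = A + eta) by (unfold T; field; lra).
set (C := fun t => rsum (fun k => x k * cl ((q k - t * x k) / h)) n).
destruct Hx as [Hx0 Hx1]. destruct Hq as [Hq0 Hq1].
assert (Hq1' : forall k, (k < n)%nat -> q k <= 1) by (intros; eapply simplex_le1; [split|]; eauto).
assert (F3 : 1 - eta / (2 * T) <= C (- T)).
{ unfold C. replace (1 - eta / (2 * T)) with (rsum (fun k => x k - h / T) n).
  2:{ rewrite rsum_minus, rsum_const, Hx1. replace (INR n * (h / T)) with (INR n * h / T) by (field; lra).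
      rewrite Hnh. field. lra. }
  apply rsum_le. intros k Hk. specialize (Hx0 k Hk). specialize (Hq0 k Hk).
  set (w := (q k - - T * x k) / h). assert (Hw : w * h = q k + T * x k) by (unfold w; field; lra).
  destruct (Rle_dec h (T * x k)).
  - rewrite cl_one by nra. assert (0 <= h / T) by (apply Rlt_le, Rdiv_lt_0_compat; lra). lra.
  - assert (0 <= cl w) by (apply cl_pos; nra).
    assert (x k <= h / T). { apply (Rmult_le_reg_l T). lra. replace (T * (h / T)) with h by (field; lra). lra. }
    nra. }
assert (F4 : C T <= -1 + A / T).
{ unfold C. replace (-1 + A / T) with (rsum (fun k => - x k + 2 * (1 + h) / T) n).
  2:{ rewrite rsum_plus, rsum_const. rewrite (rsum_ext _ (fun k => -1 * x k)) by (intros; ring).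
      rewrite rsum_scal, Hx1. unfold A. field. lra. }
  apply rsum_le. intros k Hk. specialize (Hx0 k Hk). specialize (Hq0 k Hk). specialize (Hq1' k Hk).
  set (w := (q k - T * x k) / h). assert (Hw : w * h = q k - T * x k) by (unfold w; field; lra).
  destruct (Rle_dec (1 + h) (T * x k)).
  - rewrite cl_mone by nra. assert (0 <= 2 * (1 + h) / T) by (apply Rlt_le, Rdiv_lt_0_compat; lra). lra.
  - pose proof (cl_bound w).
    assert (x k <= (1 + h) / T). { apply (Rmult_le_reg_l T). lra. replace (T * ((1 + h) / T)) with (1 + h) by (field; lra). lra. }
    assert (2 * (1 + h) / T = 2 * ((1 + h) / T)) by (field; lra). nra. }
assert (HAT : A / T < eta).
{ apply (Rmult_lt_reg_l T). lra. replace (T * (A / T)) with A by (field; lra). lra. }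
assert (HeT2 : eta / (2 * T) <= 1 / 2).
{ apply (Rmult_le_reg_l (2 * T)). lra. replace (2 * T * (eta / (2 * T))) with eta by (field; lra). nra. }
pose proof (f_bound n f x HD (conj Hx0 Hx1)) as Hfx.
pose proof (f_bound n f q HD (conj Hq0 Hq1)) as Hfq.
set (tau := Rmax (Rmin (f x) (C (- T))) (C T)).
assert (Htau1 : C T <= tau <= C (- T)).
{ unfold tau, Rmax, Rmin. repeat destruct Rle_dec; lra. }
assert (Htau2 : tau <= f x + eta). { unfold tau, Rmax, Rmin. repeat destruct Rle_dec; lra. }
assert (0 <= eta / (2 * T)) by (apply Rlt_le, Rdiv_lt_0_compat; lra).
assert (Htau3 : f x - eta / (2 * T) <= tau <= 1). { unfold tau, Rmax, Rmin. repeat destruct Rle_dec; lra. }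
assert (Hcont : continuity (fun t => C t - tau)).
{ apply continuity_minus. 2: apply continuity_const; intros a b; auto.
  unfold C. apply rsum_cont. intros k. apply continuity_mult.
  apply continuity_const; intros a b; auto.
  apply (continuity_comp (fun t => (q k - t * x k) / h) cl). 2: apply cl_cont.
  apply continuity_mult. 2: apply continuity_const; intros a b; auto.
  apply continuity_minus. apply continuity_const; intros a b; auto.
  apply continuity_mult. apply derivable_continuous, derivable_id.
  apply continuity_const; intros a b; auto. }
destruct (IVT_cor (fun t => C t - tau) (- T) T Hcont ltac:(lra)) as [t [Ht Hct]].
{ assert (0 <= C (- T) - tau) by lra. assert (C T - tau <= 0) by lra. nra. }
exists (fun k => cl ((q k - t * x k) / h)). split; [|split].
- intros; apply cl_bound.
- unfold lin. change (C t <= f x + eta). lra.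
- unfold lin.
  assert (E : rsum (fun k => q k * cl ((q k - t * x k) / h)) n =
     t * C t + rsum (fun k => (q k - t * x k) * cl ((q k - t * x k) / h)) n).
  { unfold C. rewrite <- rsum_scal, <- rsum_plus. apply rsum_ext. intros; ring. }
  assert (E2 : norm1 n (fun k => 1 * q k - t * x k) - eta / 2 <=
      rsum (fun k => (q k - t * x k) * cl ((q k - t * x k) / h)) n).
  { rewrite <- Hnh, <- rsum_const. unfold norm1. rewrite <- rsum_minus.
    apply rsum_le. intros k Hk. rewrite Rmult_1_l. apply cl_prod; auto. }
  rewrite E. assert (Hctau : C t = tau) by lra. rewrite Hctau.
  destruct (Rle_dec 0 t).
  + pose proof (HD q x (conj Hq0 Hq1) (conj Hx0 Hx1) 1 t ltac:(lra) r).
    set (e := eta / (2 * T)) in *.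
    assert (e * T = eta / 2) by (unfold e; field; lra).
    assert (0 <= e) by (unfold e; apply Rlt_le, Rdiv_lt_0_compat; lra).
    assert (t * e <= T * e) by nra.
    assert (t * (f x - e) <= t * tau) by nra. nra.
  + assert (Hnt : norm1 n (fun k => 1 * q k - t * x k) = 1 - t).
    { unfold norm1. rewrite (rsum_ext _ (fun k => q k + (- t) * x k)).
      rewrite rsum_plus, rsum_scal, Hq1, Hx1. ring.
      intros k Hk. specialize (Hq0 k Hk); specialize (Hx0 k Hk).
      rewrite Rabs_right by nra. ring. }
    rewrite Hnt in E2. assert (t * tau >= t) by nra. lra.
Qed.

Lemma telescope (g : nat -> R) m : rsum (fun k => g (S k) - g k) m = g m - g O.
Proof. induction m; simpl; [ring|]. rewrite IHm. ring. Qed.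

Lemma ip_spec y : IZR (Int_part y) <= y < IZR (Int_part y) + 1.
Proof. destruct (base_Int_part y). lra. Qed.

Lemma ip_unique y z : IZR z <= y < IZR z + 1 -> Int_part y = z.
Proof. intros H. destruct (ip_spec y).
assert (IZR (Int_part y) < IZR z + 1) by lra. assert (IZR z < IZR (Int_part y) + 1) by lra.
rewrite <- plus_IZR in *. apply lt_IZR in H2. apply lt_IZR in H3. lia. Qed.

Lemma rsum_mono p m k : (forall i, (i < m)%nat -> 0 <= p i) -> (k <= m)%nat -> rsum p k <= rsum p m.
Proof. intros H Hk. induction m. replace k with O by lia; lra.
destruct (Nat.eq_dec k (S m)). subst; lra.
simpl. assert (0 <= p m) by (apply H; lia). assert (rsum p k <= rsum p m) by (apply IHm; [intros; apply H; lia|lia]). lra. Qed.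

Lemma net n (hn : (1 <= n)%nat) d : 0 < d -> exists M (P : nat -> nat -> R),
  (forall r, (r <= M)%nat -> simplex n (P r)) /\
  forall p, simplex n p -> exists r, (r <= M)%nat /\ norm1 n (fun k => p k - P r k) <= d.
Proof.
intros Hd.
assert (Hn : 1 <= INR n) by (apply (le_INR 1); auto).
destruct (archimed (INR n / d)) as [Hu _].
assert (Hpos : 0 < INR n / d) by (apply Rdiv_lt_0_compat; lra).
set (N := Z.to_nat (up (INR n / d))).
assert (HNe : INR N = IZR (up (INR n / d))).
{ unfold N. rewrite INR_IZR_INZ, Z2Nat.id. auto. apply le_IZR. lra. }
assert (HN : INR n / d < INR N) by lra.
assert (HN1 : 0 < INR N) by lra.
assert (HnN : INR n / INR N <= d).
{ apply (Rmult_le_reg_l (INR N)); auto. replace (INR N * (INR n / INR N)) with (INR n) by (field; lra).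
  apply (Rmult_lt_compat_r d) in HN; auto. replace (INR n / d * d) with (INR n) in HN by (field; lra). lra. }
set (b := (N + 1)%nat).
exists (b ^ n - 1)%nat.
exists (fun r => if Req_EM_T (rsum (fun k => INR (digit b k r)) n) (INR N)
          then (fun k => INR (digit b k r) / INR N) else indv O).
split.
- intros r _. destruct Req_EM_T as [e|e].
  + split. intros; unfold Rdiv; apply Rmult_le_pos; [apply pos_INR|apply Rlt_le, Rinv_0_lt_compat; lra].
    unfold Rdiv. rewrite rsum_scalr, e. field. lra.
  + apply simplex_ind. lia.
- intros p [Hp0 Hp1].
  set (z := fun k => Int_part (INR N * rsum p k)).
  set (m := fun k => Z.to_nat (z (S k) - z k)).
  assert (Hs01 : forall k, (k <= n)%nat -> 0 <= rsum p k <= 1).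
  { intros k Hk. split. apply rsum_nonneg; intros; apply Hp0; lia.
    rewrite <- Hp1. apply rsum_mono; auto. }
  assert (Hz0 : forall k, (k <= n)%nat -> (0 <= z k)%Z).
  { intros k Hk. destruct (ip_spec (INR N * rsum p k)). specialize (Hs01 k Hk).
    assert (IZR (-1) < IZR (z k)) by (unfold z; simpl; nra). apply lt_IZR in H1. lia. }
  assert (HzN : forall k, (k <= n)%nat -> (z k <= Z.of_nat N)%Z).
  { intros k Hk. destruct (ip_spec (INR N * rsum p k)). specialize (Hs01 k Hk).
    assert (IZR (z k) <= IZR (Z.of_nat N)) by (rewrite <- INR_IZR_INZ; unfold z; nra). apply le_IZR in H1. lia. }
  assert (Hzm : forall k, (k < n)%nat -> (z k <= z (S k))%Z).
  { intros k Hk. destruct (ip_spec (INR N * rsum p k)). destruct (ip_spec (INR N * rsum p (S k))).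
    assert (0 <= p k) by (apply Hp0; auto). simpl rsum in H1, H2.
    assert (IZR (z k) < IZR (z (S k) + 1)) by (rewrite plus_IZR; unfold z; simpl; nra).
    apply lt_IZR in H4. lia. }
  assert (Hm : forall k, (k < n)%nat -> INR (m k) = IZR (z (S k)) - IZR (z k)).
  { intros k Hk. unfold m. rewrite INR_IZR_INZ, Z2Nat.id. apply minus_IZR. specialize (Hzm k Hk). lia. }
  destruct (digits_exist b ltac:(unfold b; lia) n m) as [r [Hr Hdr]].
  { intros k Hk. unfold m, b. specialize (Hz0 k ltac:(lia)). specialize (HzN (S k) ltac:(lia)). lia. }
  exists r. split. { assert (b ^ n <> 0)%nat by (apply Nat.pow_nonzero; unfold b; lia). lia. }
  assert (Hsum : rsum (fun k => INR (digit b k r)) n = INR N).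
  { rewrite (rsum_ext _ (fun k => IZR (z (S k)) - IZR (z k))).
    2:{ intros k Hk. rewrite Hdr by auto. apply Hm; auto. }
    rewrite (telescope (fun k => IZR (z k))).
    assert (z n = Z.of_nat N).
    { unfold z. apply ip_unique. rewrite Hp1, <- INR_IZR_INZ. lra. }
    assert (z O = 0%Z).
    { unfold z. apply ip_unique. simpl. lra. }
    rewrite H, H0, <- INR_IZR_INZ. ring. }
  destruct Req_EM_T as [_|e]; [|contradiction].
  eapply Rle_trans; [|apply HnN].
  unfold norm1. replace (INR n / INR N) with (rsum (fun _ => 1 / INR N) n) by (rewrite rsum_const; field; lra).
  apply rsum_le. intros k Hk. rewrite Hdr, Hm by auto.
  destruct (ip_spec (INR N * rsum p k)). destruct (ip_spec (INR N * rsum p (S k))).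
  fold (z k) in H, H0. fold (z (S k)) in H1, H2.
  assert (INR N * rsum p (S k) = INR N * rsum p k + INR N * p k) by (simpl; ring).
  replace (p k - (IZR (z (S k)) - IZR (z k)) / INR N) with
     ((INR N * p k - (IZR (z (S k)) - IZR (z k))) / INR N) by (field; lra).
  unfold Rdiv. rewrite Rabs_mult, (Rabs_right (/ INR N)).
  2: apply Rle_ge, Rlt_le, Rinv_0_lt_compat; lra.
  apply Rmult_le_compat_r. apply Rlt_le, Rinv_0_lt_compat; lra.
  apply Rabs_le. lra.
Qed.

Lemma D1_lip n f : D1ineq n f -> forall a b, simplex n a -> simplex n b ->
  Rabs (f a - f b) <= norm1 n (fun k => a k - b k).
Proof. intros HD a b Ha Hb.
assert (E : forall u v, norm1 n (fun k => 1 * u k - 1 * v k) = norm1 n (fun k => u k - v k)).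
{ intros. unfold norm1. apply rsum_ext. intros. f_equal. ring. }
apply Rabs_le. split.
- pose proof (HD b a Hb Ha 1 1 ltac:(lra) ltac:(lra)). rewrite E, norm1_sym in H. lra.
- pose proof (HD a b Ha Hb 1 1 ltac:(lra) ltac:(lra)). rewrite E in H. lra. Qed.

Lemma D1_closure n (hn : (1 <= n)%nat) f : D1 n f -> closure_D0 n f.
Proof.
intros [Hc HD]. split; auto. intros eps He.
set (eta := Rmin (eps / 4) 1).
assert (Heta : 0 < eta /\ eta <= 1 /\ eta <= eps / 4) by (unfold eta, Rmin; destruct Rle_dec; lra).
destruct (net n hn (eps / 4) ltac:(lra)) as [M [P [HP Hcov]]].
assert (Hex : forall r s, exists c : nat -> R, (forall k, -1 <= c k <= 1) /\
   ((r <= M)%nat -> (s <= M)%nat -> lin n c (P r) <= f (P r) + eta /\ f (P s) - eta <= lin n c (P s))).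
{ intros r s. destruct (Compare_dec.le_dec r M); destruct (Compare_dec.le_dec s M).
  - destruct (interp1 n hn f (P r) (P s) eta HD (HP r l) (HP s l0) ltac:(lra) ltac:(lra)) as [c [H1 [H2 H3]]].
    exists c. auto.
  - exists (fun _ => 0). split. intros; lra. intros; lia.
  - exists (fun _ => 0). split. intros; lra. intros; lia.
  - exists (fun _ => 0). split. intros; lra. intros; lia. }
set (C := fun r s => proj1_sig (constructive_indefinite_description _ (Hex r s))).
assert (HC : forall r s, (forall k, -1 <= C r s k <= 1) /\
   ((r <= M)%nat -> (s <= M)%nat -> lin n (C r s) (P r) <= f (P r) + eta /\ f (P s) - eta <= lin n (C r s) (P s))).
{ intros r s. unfold C. destruct (constructive_indefinite_description _ (Hex r s)). simpl. auto. }
exists (fun p => mnr (fun r => mxr (fun s => lin n (C r s) p) M) M). split.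
{ apply minmax_D0. intros; apply HC. }
intros p Hp. destruct (Hcov p Hp) as [r0 [Hr0 Hd]].
pose proof (D1_lip n f HD p (P r0) Hp (HP r0 Hr0)) as Hl. rewrite Hd in Hl.
assert (Hdiff : forall c, (forall k, -1 <= c k <= 1) -> Rabs (lin n c p - lin n c (P r0)) <= eps / 4).
{ intros c Hc'. eapply Rle_trans; [apply lin_diff|apply Hd]. intros; auto. }
apply Rabs_le. split.
- assert (mnr (fun r => mxr (fun s => lin n (C r s) p) M) M <= f p + eta + eps / 2).
  { eapply Rle_trans. apply (mnr_le _ M r0 Hr0). apply mxr_le. intros s Hs.
    destruct (HC r0 s) as [Hb Hi]. destruct (Hi Hr0 Hs) as [Hi1 _].
    pose proof (Hdiff _ Hb). apply Rabs_le_bw in H. apply Rabs_le_bw in Hl. lra. }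
  lra.
- assert (f p - eta - eps / 2 <= mnr (fun r => mxr (fun s => lin n (C r s) p) M) M).
  { apply mnr_ge. intros r Hr. eapply Rle_trans; [|apply (mxr_ge _ M r0 Hr0)].
    destruct (HC r r0) as [Hb Hi]. destruct (Hi Hr Hr0) as [_ Hi2].
    pose proof (Hdiff _ Hb). apply Rabs_le_bw in H. apply Rabs_le_bw in Hl. lra. }
  lra.
Qed.

Theorem lemma3 (n : nat) (hn : (1 <= n)%nat) :
  (forall f, D0 n f -> D1 n f) /\
  (forall f, closure_D0 n f <-> D1 n f).
Proof. split. apply D0_D1. intros f; split. apply closure_D1. apply D1_closure; auto. Qed.
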